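(* Let $\mathbb L$ be an unobstructed combinatorially indecomposable tropical Lagrangian multi-section of rank $r$ over a complete fan $\Sigma$ in $N_{\mathbb R}\cong\mathbb R^n$, with $\mathbb C^\times$-local system $\mathcal L$ on $L\setminus L^{(n-2)}$ and consistent collection of wall-crossing automorphisms $\Theta$. For any $\mathbb C^\times$-local system $\mathcal L'$ on $L\setminus L^{(n-2)}$ isomorphic to $\mathcal L$, there is a consistent collection $\Theta'$ for $(\mathbb L,\mathcal L')$ and an isomorphism of toric vector bundles $\mathcal E(\mathbb L,\mathcal L,\Theta)\cong\mathcal E(\mathbb L,\mathcal L',\Theta')$.
   Context: $N$ lattice of rank $n$, $M=\mathrm{Hom}(N,\mathbb Z)$, $\Sigma(k)$ the $k$-dimensional cones, $\sigma^\vee$ dual cones, $U(\sigma)=\mathrm{Spec}\,\mathbb C[\sigma^\vee\cap M]$, $z^m$ monomials, $X_\Sigma$ the toric variety with torus $T=(\mathbb C^\times)^n$. $\mathbb L=(L,\Sigma_L,\mu,\pi,\varphi)$ is a tropical Lagrangian multi-section: a cone complex $L$ (finite union of closed rational polyhedral cones glued along faces), weights $\mu$, a branched covering $\pi$ onto $(N_{\mathbb R},\Sigma)$ mapping cones homeomorphically onto cones with weighted fibre count $r$, and $\varphi$ continuous, integral linear on cones; $m(\sigma')\in M$ its slope on a maximal cone; $\sigma^{(1)},\dots,\sigma^{(r)}$ the lifts of $\sigma\in\Sigma(n)$ with multiplicity; $L^{(k)}$ the union of cones of dimension $\le k$. Being combinatorially indecomposable, $\mathbb L$ is $(n-1)$-separable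 and unramified outside $L^{(n-2)}$; for adjacent $\sigma_1,\sigma_2\in\Sigma(n)$ each lift $\sigma_1^{(\alpha)}$ determines a unique lift $\sigma_2^{(\beta)}$ with $\sigma_1^{(\alpha)}\cap\sigma_2^{(\beta)}$ of dimension $n-1$. A $\mathbb C^\times$-local system on $L\setminus L^{(n-2)}$ is represented by constants $g^{sf}_{\sigma_1^{(\alpha)}\sigma_2^{(\beta)}}\in\mathbb C^\times$ on such adjacent pairs. $\mathcal E_\sigma$ is the trivial rank $r$ bundle on $U(\sigma)$ with frame $1(\sigma^{(\alpha)})$ of torus weight $m(\sigma^{(\alpha)})$. $G^{sf}_{\sigma_1\sigma_2}:1(\sigma_1^{(\alpha)})\mapsto g^{sf}_{\sigma_1^{(\alpha)}\sigma_2^{(\beta)}}z^{m(\sigma_1^{(\alpha)})-m(\sigma_2^{(\beta)})}1(\sigma_2^{(\beta)})$. For $\tau=\sigma_1\cap\sigma_2\in\Sigma(n-1)$ and a cone $\omega'$ of $L$, $N_\tau(\omega')$ is the endomorphism of $\mathcal E_{\sigma_1}|_{U(\tau)}$ with $(\alpha,\beta)$-entry $n^{(\alpha\beta)}_\tau(\omega')z^{m(\sigma_1^{(\alpha)})-m(\sigma_1^{(\beta)})}$ ($n$'s arbitrary complex constants) if $\omega'\subset\sigma_1^{(\alpha)}\cap\sigma_1^{(\beta)}$, $\alpha\ne\beta$, $m(\sigma_1^{(\alpha)})-m(\sigma_1^{(\beta)})\in\tau^\vee\cap M$, and $0$ otherwise; $S'_\tau=\{\sigma_1^{(\alpha)}\cap\sigma_1^{(\beta)}:m(\sigma_1^{(\alpha)})-m(\sigma_1^{(\beta)})\in\tau^\vee\cap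 M\}$; $\Theta_{\sigma_1\sigma_2}=\Theta_\tau=\prod_{\omega'\in S'_\tau}\exp N_\tau(\omega')$; $\Theta$ the collection of these; $G_{\sigma_1\sigma_2}=G^{sf}_{\sigma_1\sigma_2}\circ\Theta_{\sigma_1\sigma_2}$ on $U(\tau)$ (with $G_{\sigma_2\sigma_1}=G_{\sigma_1\sigma_2}^{-1}$). $\Theta$ is consistent if for every $\omega\in\Sigma$ and every cycle $\sigma_1,\dots,\sigma_{l+1}=\sigma_1$ of maximal cones containing $\omega$ with consecutive ones sharing an $(n-1)$-dimensional cone, $G_{\sigma_l\sigma_{l+1}}|_{U(\omega)}\circ\cdots\circ G_{\sigma_1\sigma_2}|_{U(\omega)}=\mathrm{Id}$. $\mathbb L$ is unobstructed if some $\mathcal L$ and consistent $\Theta$ exist. Then for arbitrary $\sigma_1,\sigma_2\in\Sigma(n)$, $G_{\sigma_1\sigma_2}$ on $U(\sigma_1\cap\sigma_2)$ is the composition of the $G$'s along any chain of maximal cones containing $\sigma_1\cap\sigma_2$ from $\sigma_1$ to $\sigma_2$ with consecutive ones sharing an $(n-1)$-cone; these form a cocycle, and $\mathcal E(\mathbb L,\mathcal L,\Theta)$ is the resulting toric vector bundle on $X_\Sigma$. *)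

(* Defs.v *)
From HB Require Import structures.
From mathcomp Require Import all_boot all_order all_algebra.
From mathcomp Require Import reals complex.

Set Implicit Arguments.
Unset Strict Implicit.
Unset Printing Implicit Defensive.

Import Order.TTheory GRing.Theory Num.Theory.
Local Open Scope ring_scope.
Local Open Scope complex_scope.

(* A rational polyhedral cone is given by a finite list of integral          *)
(* generators.                                                               *)

Section Geometry.
Variables (R : realType) (n : nat).

Definition pairZ (m v : 'rV[int]_n) : int := \sum_(k < n) m 0 k * v 0 k.
Definition pairR (m : 'rV[int]_n) (x : 'rV[R]_n) : R :=
  \sum_(k < n) (m 0 k)%:~R * x 0 k.
Definition intr (v : 'rV[int]_n) : 'rV[R]_n := map_mx (fun z : int => z%:~R) v.

Definition cone_set (g : seq 'rV[int]_n) (x : 'rV[R]_n) : Prop :=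
  exists lam : nat -> R, (forall k, 0 <= lam k) /\
    x = \sum_(k < size g) lam k *: intr (nth 0 g k).

Definition in_dual (g : seq 'rV[int]_n) (m : 'rV[int]_n) : bool :=
  all (fun v => 0 <= pairZ m v) g.

Definition cone_dim (g : seq 'rV[int]_n) : nat :=
  \rank (\matrix_(k < size g) intr (nth 0 g k)).

Definition same_cone (g h : seq 'rV[int]_n) : Prop :=
  forall x, cone_set g x <-> cone_set h x.

Definition is_face (gw gs : seq 'rV[int]_n) : Prop :=
  exists m, in_dual gs m /\
    forall x, cone_set gw x <-> (cone_set gs x /\ pairR m x = 0).

Definition strongly_convex (g : seq 'rV[int]_n) : Prop :=
  forall x, cone_set g x -> cone_set g (- x) -> x = 0.

(* a complete fan, given by an injective enumeration of its cones *)
Definition complete_fan (s : nat) (S : 'I_s -> seq 'rV[int]_n) : Prop :=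
  [/\ forall i, strongly_convex (S i),
      forall i j, same_cone (S i) (S j) -> i = j,
      forall i gw, is_face gw (S i) -> exists j, same_cone (S j) gw,
      forall i j, exists gw,
        [/\ forall x, cone_set gw x <-> (cone_set (S i) x /\ cone_set (S j) x),
            is_face gw (S i) & is_face gw (S j)]
    & forall x, exists i, cone_set (S i) x].

End Geometry.
Arguments cone_set R {n} g x.
Arguments pairR R {n} m x.
Arguments intr R {n} v.
Arguments same_cone R {n} g h.

(* L is a cone complex whose cones are indexed by 'I_nL, with face relation  *)
(* Lface (Lface w l : "w is a face of l"); Lpi is the map pi on cones; mu   *)
(* the weights; slope l is the integral slope of phi on the cone l (for     *)
(* non-maximal cones it is only meaningful modulo the orthogonal of the     *)
(* cone).  lift i a = sigma_i^(a) (lifts of maximal cones, with             *)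
(* multiplicity), adj i j a = the unique b with sigma_i^(a) /\ sigma_j^(b)  *)
(* of dimension n-1.                                                         *)

Record TLMS (n r : nat) := {
  nS : nat;
  fan : 'I_nS -> seq 'rV[int]_n;
  nL : nat;
  Lpi : 'I_nL -> 'I_nS;
  Lface : rel 'I_nL;
  mu : 'I_nL -> nat;
  slope : 'I_nL -> 'rV[int]_n;
  lift : 'I_nS -> 'I_r -> 'I_nL;
  adj : 'I_nS -> 'I_nS -> 'I_r -> 'I_r
}.
Arguments nS {n r} t.
Arguments fan {n r} t _.
Arguments nL {n r} t.
Arguments Lpi {n r} t _.
Arguments Lface {n r} t _ _.
Arguments mu {n r} t _.
Arguments slope {n r} t _.
Arguments lift {n r} t _ _.
Arguments adj {n r} t _ _ _.

Section TLMSdefs.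
Local Unset Implicit Arguments.
Variables (R : realType) (n r : nat) (L : TLMS n r).

Definition C := R[i].

Local Notation S := (fan L).
Local Notation cone := ('I_(nS L)).
Local Notation Lcone := ('I_(nL L)).

Definition fface (w i : cone) : Prop := is_face R (S w) (S i).

Definition maxc (i : cone) : Prop := cone_dim R (S i) = n.

Definition wall (t i j : cone) : Prop :=
  [/\ maxc i, maxc j, i <> j, cone_dim R (S t) = n.-1 &
      forall x, cone_set R (S t) x <-> (cone_set R (S i) x /\ cone_set R (S j) x)].

Definition adjacent (i j : cone) : Prop := exists t, wall t i j.

Definition mslope (i : cone) (a : 'I_r) : 'rV[int]_n := slope L (lift L i a).

Definition in_dual_inter (i j : cone) (u : 'rV[int]_n) : Prop :=
  forall x, cone_set R (S i) x -> cone_set R (S j) x -> 0 <= pairR R u x.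

Definition is_TLMS : Prop :=
  complete_fan R S /\
  [/\
      [/\ reflexive (Lface L), antisymmetric (Lface L) & transitive (Lface L)],
      (* pi maps each cone homeomorphically onto a cone: faces onto faces *)
      (forall w l, Lface L w l -> fface (Lpi L w) (Lpi L l)) /\
      (forall l j, fface j (Lpi L l) ->
          exists w, [/\ Lface L w l, Lpi L w = j &
            forall w', Lface L w' l -> Lpi L w' = j -> w' = w]),
      forall i, maxc i ->
        (forall l, Lpi L l = i -> (0 < mu L l)%N) /\
        (\sum_(l | Lpi L l == i) mu L l)%N = r,
      (* phi continuous and integral linear on cones *)
      (forall w l, Lface L w l ->
         forall v, v \in S (Lpi L w) -> pairZ (slope L l - slope L w) v = 0)
    &
      forall i, maxc i ->
        (forall a, Lpi L (lift L i a) = i) /\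
        (forall l, Lpi L l = i -> #|[set a | lift L i a == l]| = mu L l)].

Definition share_facet (a b : Lcone) : Prop :=
  exists w, [/\ Lface L w a, Lface L w b & cone_dim R (S (Lpi L w)) = n.-1].

(* The consequences of combinatorial indecomposability stated in the paper:
   for adjacent sigma_i, sigma_j each lift sigma_i^(a) determines a unique
   lift sigma_j^(b) with sigma_i^(a) /\ sigma_j^(b) of dimension n-1,
   and adj records it. *)
Definition comb_indec_conseq : Prop :=
  forall t i j a, wall t i j ->
    share_facet (lift L i a) (lift L j (adj L i j a)) /\
    forall b, share_facet (lift L i a) (lift L j b) -> b = adj L i j a.

(* g i j a = g^sf_{sigma_i^(a) sigma_j^(adj a)} for adjacent i < j
   (the reverse crossing carries the inverse constant). *)
Definition local_system (g : cone -> cone -> 'I_r -> C) : Prop :=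
  forall t i j a, wall t i j -> (i < j)%N -> g i j a != 0.

Definition ls_iso (g g' : cone -> cone -> 'I_r -> C) : Prop :=
  exists c : cone -> 'I_r -> C,
    (forall i a, maxc i -> c i a != 0) /\
    forall t i j a, wall t i j -> (i < j)%N ->
      g' i j a = c j (adj L i j a) * g i j a / c i a.

(* A T-equivariant morphism between the trivial bundles with torus-weighted
   frames 1(sigma^(a)) (weights u_a) and 1(sigma'^(b)) (weights w_b) is
   1(sigma^(a)) |-> sum_b A a b z^(u_a - w_b) 1(sigma'^(b)), A constant;
   it is recorded by its constant matrix A.  Composition F' o F corresponds
   to A_F *m A_F'. *)

(* regularity of such a morphism over U(sigma_i), both frames over sigma_i *)
Definition regular_on (i : cone) (A : 'M[C]_r) : Prop :=
  forall a b, A a b != 0 -> in_dual (S i) (mslope i a - mslope i b).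

Definition cvgC (u : nat -> C) (l : C) : Prop :=
  forall e : R, 0 < e -> exists N, forall k, (N <= k)%N -> `|u k - l| < e%:C.

Definition is_mxexp (A E : 'M[C]_r) : Prop :=
  forall a b, cvgC (fun K => (\sum_(k < K) (k`!%:R)^-1 *: A ^+ k) a b) (E a b).

(* cones of L are represented, inside L, by the set of cones of L they contain;
   this is the intersection sigma_i^(a) /\ sigma_i^(b) *)
Definition inter (a b : Lcone) : {set Lcone} :=
  [set w | Lface L w a && Lface L w b].

(* X in S'_tau, tau = sigma_i /\ sigma_j, frame of sigma_i *)
Definition inS' (i j : cone) (X : {set Lcone}) : Prop :=
  exists a b, [/\ X = inter (lift L i a) (lift L i b), X != set0 &
                  in_dual_inter i j (mslope i a - mslope i b)].

(* N0 is the constant matrix of some N_tau(X) (arbitrary constants n) *)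
Definition N_ok (i j : cone) (X : {set Lcone}) (N0 : 'M[C]_r) : Prop :=
  forall a b, N0 a b != 0 ->
    [/\ a != b, X \subset inter (lift L i a) (lift L i b) &
        in_dual_inter i j (mslope i a - mslope i b)].

(* T is (the constant matrix of) Theta_tau = prod_{X in S'_tau} exp N_tau(X)
   (as the entries of N_tau(X) are n z^(m_a - m_b), exp N_tau(X) has entries
   (exp N0) a b z^(m_a - m_b)) *)
Definition wc_matrix (i j : cone) (T : 'M[C]_r) : Prop :=
  exists sq : seq {set Lcone},
    [/\ uniq sq, forall X, X \in sq <-> inS' i j X &
      exists N0 E : {set Lcone} -> 'M[C]_r,
        (forall X, X \in sq -> N_ok i j X (N0 X) /\ is_mxexp (N0 X) (E X)) /\
        T = foldr (fun X acc => E X *m acc) 1%:M sq].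

(* a collection Theta of wall-crossing automorphisms (walls oriented by i < j) *)
Definition wc_collection (Th : cone -> cone -> 'M[C]_r) : Prop :=
  forall t i j, wall t i j -> (i < j)%N -> wc_matrix i j (Th i j).

Definition Gsf (g : cone -> cone -> 'I_r -> C) (i j : cone) : 'M[C]_r :=
  \matrix_(a, b) (if b == adj L i j a then g i j a else 0).

Definition Gmat g (Th : cone -> cone -> 'M[C]_r) (i j : cone) : 'M[C]_r :=
  Th i j *m Gsf g i j.

Definition Gfull g Th (a b : cone) : 'M[C]_r :=
  if (a < b)%N then Gmat g Th a b else invmx (Gmat g Th b a).

Fixpoint chain_mx g Th (a : cone) (sq : seq cone) : 'M[C]_r :=
  if sq is b :: sq' then Gfull g Th a b *m chain_mx g Th b sq' else 1%:M.

Fixpoint adj_chain (a : cone) (sq : seq cone) : Prop :=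
  if sq is b :: sq' then adjacent a b /\ adj_chain b sq' else True.

Definition consistent g Th : Prop :=
  forall (w i0 : cone) (sq : seq cone),
    (forall k, k \in i0 :: sq -> maxc k /\ fface w k) ->
    adj_chain i0 sq -> last i0 sq = i0 ->
    chain_mx g Th i0 sq = 1%:M.

Definition unobstructed : Prop :=
  exists g Th, [/\ local_system g, wc_collection Th & consistent g Th].

(* isomorphism of the toric vector bundles E(L, g, Th) and E(L, g', Th'):
   T-equivariant isomorphisms D_sigma : E_sigma -> E'_sigma over each U(sigma),
   compatible with the transition maps. *)
Definition bundle_iso g Th g' Th' : Prop :=
  exists D : cone -> 'M[C]_r,
    (forall i, maxc i ->
       [/\ D i \in unitmx, regular_on i (D i) & regular_on i (invmx (D i))]) /\
    forall t i j, wall t i j -> (i < j)%N ->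
      D i *m Gmat g' Th' i j = Gmat g Th i j *m D j.

End TLMSdefs.
Arguments C R.
Arguments fface R {n r} L.
Arguments maxc R {n r} L.
Arguments wall R {n r} L.
Arguments adjacent R {n r} L.
Arguments mslope {n r} L.
Arguments in_dual_inter R {n r} L.
Arguments is_TLMS R {n r} L.
Arguments share_facet R {n r} L.
Arguments comb_indec_conseq R {n r} L.
Arguments local_system R {n r} L.
Arguments ls_iso R {n r} L.
Arguments regular_on R {n r} L.
Arguments cvgC R.
Arguments is_mxexp R {r}.
Arguments inter {n r} L.
Arguments inS' R {n r} L.
Arguments N_ok R {n r} L.
Arguments wc_matrix R {n r} L.
Arguments wc_collection R {n r} L.
Arguments Gsf R {n r} L.
Arguments Gmat R {n r} L.
Arguments Gfull R {n r} L.
Arguments chain_mx R {n r} L.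
Arguments adj_chain R {n r} L.
Arguments consistent R {n r} L.
Arguments unobstructed R {n r} L.
Arguments bundle_iso R {n r} L.

(* Main.v *)
Require Import Defs.
From HB Require Import structures.
From mathcomp Require Import all_boot all_order all_algebra.
From mathcomp Require Import reals complex.
From mathcomp Require Import ring.

Set Implicit Arguments.
Unset Strict Implicit.
Unset Printing Implicit Defensive.
Import Order.TTheory GRing.Theory Num.Theory.
Local Open Scope ring_scope.
Local Open Scope complex_scope.

Section Aux.
Variable R : realType.
Local Notation CC := (C R).

Lemma cvgC_scale (k : CC) u v l m :
  (forall K, v K = k * u K) -> m = k * l -> cvgC R u l -> cvgC R v m.
Proof.
move=> hv -> H e e0.
have [s [s0 ns]] : exists s : R, 0 <= s /\ `|k| = s%:C.
  by exists (Num.sqrt ((complex.Re k)^+2 + (complex.Im k)^+2)); rewrite normc_def sqrtr_ge0.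
have s1 : 0 < s + 1 by rewrite ltr_wpDl.
have [N HN] := H (e / (s + 1)) (divr_gt0 e0 s1).
exists N => K /HN h.
rewrite hv -mulrBr normrM ns.
apply: (@le_lt_trans _ _ ((s + 1)%:C * `|u K - l|)).
  by apply: ler_wpM2r; rewrite ?normr_ge0 // lecR lerDl.
apply: (@lt_le_trans _ _ ((s + 1)%:C * (e / (s + 1))%:C)).
  by rewrite ltr_pM2l // ltcR.
by rewrite -rmorphM mulrC divfK ?gt_eqF.
Qed.

Variable r : nat.
Definition dg (c : 'I_r -> CC) : 'M[CC]_r := diag_mx (\row_a c a).
Definition dgi (c : 'I_r -> CC) : 'M[CC]_r := diag_mx (\row_a (c a)^-1).

Lemma dgiK c : (forall a, c a != 0) -> dgi c *m dg c = 1%:M.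
Proof.
move=> h; rewrite mulmx_diag; apply/matrixP => i j; rewrite !mxE mulVf //.
Qed.

Lemma dgKi c : (forall a, c a != 0) -> dg c *m dgi c = 1%:M.
Proof.
move=> h; rewrite mulmx_diag; apply/matrixP => i j; rewrite !mxE mulfV //.
Qed.

Lemma conj_entry c1 c2 (M : 'M[CC]_r) a b :
  (dgi c1 *m M *m dg c2) a b = (c1 a)^-1 * M a b * c2 b.
Proof. by rewrite /dg /dgi mul_mx_diag mxE mul_diag_mx !mxE. Qed.

Lemma invmx_eq (X Y : 'M[CC]_r) : X *m Y = 1%:M -> Y *m X = 1%:M -> invmx X = Y.
Proof.
move=> XY YX; have [uX _] := mulmx1_unit XY.
by rewrite -[invmx X]mul1mx -YX -mulmxA mulmxV // mulmx1.
Qed.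

Lemma cancQP c m p (X : 'M[CC]_(m, r)) (Y : 'M[CC]_(r, p)) :
  (forall a, c a != 0) -> X *m dg c *m dgi c *m Y = X *m Y.
Proof. by move=> h; rewrite -(mulmxA X) dgKi // mulmx1. Qed.

Lemma cancPQ c m p (X : 'M[CC]_(m, r)) (Y : 'M[CC]_(r, p)) :
  (forall a, c a != 0) -> X *m dgi c *m dg c *m Y = X *m Y.
Proof. by move=> h; rewrite -(mulmxA X) dgiK // mulmx1. Qed.

Lemma conjX c (A : 'M[CC]_r) k : (forall a, c a != 0) ->
  (dgi c *m A *m dg c) ^+ k = dgi c *m (A ^+ k) *m dg c.
Proof.
move=> h; elim: k => [|k IH]; first by rewrite !expr0 mulmx1 dgiK.
by rewrite !exprS IH -!mulmxE !mulmxA cancQP.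
Qed.

Lemma conj_exp c (A E : 'M[CC]_r) : (forall a, c a != 0) ->
  is_mxexp R A E -> is_mxexp R (dgi c *m A *m dg c) (dgi c *m E *m dg c).
Proof.
move=> h H a b.
apply: (cvgC_scale (k := (c a)^-1 * c b)) (H a b) => [K|]; last first.
  by rewrite conj_entry; ring.
have -> : \sum_(k < K) (k`!%:R)^-1 *: (dgi c *m A *m dg c) ^+ k =
   dgi c *m (\sum_(k < K) (k`!%:R)^-1 *: A ^+ k) *m dg c.
  rewrite mulmx_sumr mulmx_suml; apply: eq_bigr => k _.
  by rewrite conjX // -scalemxAr -scalemxAl.
by rewrite conj_entry; ring.
Qed.

Lemma conj_foldr T c (E : T -> 'M[CC]_r) sq : (forall a, c a != 0) ->
  dgi c *m foldr (fun X acc => E X *m acc) 1%:M sq *m dg c =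
  foldr (fun X acc => (dgi c *m E X *m dg c) *m acc) 1%:M sq.
Proof.
move=> h; elim: sq => [|X sq IH] /=; first by rewrite mulmx1 dgiK.
by rewrite -IH !mulmxA cancQP.
Qed.

End Aux.

Section Main.
Variables (R : realType) (n r : nat) (L : TLMS n r).
Local Notation cone := ('I_(nS L)).

Lemma wall_sym t (i j : cone) : wall R L t i j -> wall R L t j i.
Proof.
case=> mi mj nij dt h; split=> //; first by move=> e; apply: nij.
by move=> x; rewrite h; split; case.
Qed.

Lemma common_face t (i j : cone) : is_TLMS R L -> wall R L t i j ->
  exists w, fface R L w i /\ fface R L w j.
Proof.
case=> [[_ _ f3 f4 _] _] _.
have [gw [_ hi hj]] := f4 i j.
have [w hw] := f3 i gw hi.
have tr : forall k, is_face R gw (fan L k) -> fface R L w k.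
  move=> k [m [hm hx]]; exists m; split => // x.
  by rewrite -hx; apply: hw.
by exists w; split; apply: tr.
Qed.

Lemma Gmat_unit g Th t (i j : cone) : is_TLMS R L -> consistent R L g Th ->
  wall R L t i j -> (i < j)%N -> Gmat R L g Th i j \in unitmx.
Proof.
move=> hT hc W ij.
have [w [wi wj]] := common_face hT W.
have W' := wall_sym W.
have [mi mj _ _ _] := W.
have := hc w i [:: j; i].
rewrite /= /Gfull ij ltnNge (ltnW ij) /= mulmx1.
move=> H.
have hk : forall k, k \in [:: i; j; i] -> maxc R L k /\ fface R L w k.
  by move=> k; rewrite !inE => /or3P [] /eqP ->.
have := H hk (conj (ex_intro _ t W) (conj (ex_intro _ t W') I)) (erefl _).
by case/mulmx1_unit.
Qed.

End Main.

Theorem proposition4p19 (R : realType) (n r : nat) (L : TLMS n r)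
    (g : 'I_(nS L) -> 'I_(nS L) -> 'I_r -> C R)
    (Th : 'I_(nS L) -> 'I_(nS L) -> 'M[C R]_r) :
  is_TLMS R L -> comb_indec_conseq R L -> unobstructed R L ->
  local_system R L g -> wc_collection R L Th -> consistent R L g Th ->
  forall g' : 'I_(nS L) -> 'I_(nS L) -> 'I_r -> C R,
    local_system R L g' -> ls_iso R L g g' ->
    exists Th' : 'I_(nS L) -> 'I_(nS L) -> 'M[C R]_r,
      [/\ wc_collection R L Th', consistent R L g' Th'
        & bundle_iso R L g Th g' Th'].
Proof.
move=> hT _ _ _ hTh hcons g' _ [c [hc hg']].
pose P i := dgi (c i); pose Q i := dg (c i).
pose Th' i j := P i *m Th i j *m Q i.
exists Th'.
have mW : forall t i j, wall R L t i j -> maxc R L i /\ maxc R L j.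
  by move=> t i j [].
have Gsf' : forall t i j, wall R L t i j -> (i < j)%N ->
    Gsf R L g' i j = P i *m Gsf R L g i j *m Q j.
  move=> t i j W ij; apply/matrixP => a b.
  rewrite /P /Q conj_entry !mxE; case: eqP => [->|_].
    by rewrite (hg' t) //; ring.
  by rewrite mulr0 mul0r.
have Gmat' : forall t i j, wall R L t i j -> (i < j)%N ->
    Gmat R L g' Th' i j = P i *m Gmat R L g Th i j *m Q j.
  move=> t i j W ij; have [mi mj] := mW _ _ _ W.
  rewrite /Gmat (Gsf' t) // /Th' /P /Q !mulmxA cancQP ?mulmxA //.
  by move=> a; apply: hc.
have Gfull' : forall i j, adjacent R L i j ->
    Gfull R L g' Th' i j = P i *m Gfull R L g Th i j *m Q j.
  move=> i j [t W]; have [mi mj] := mW _ _ _ W.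
  have ci : forall a, c i a != 0 by move=> a; apply: hc.
  have cj : forall a, c j a != 0 by move=> a; apply: hc.
  rewrite /Gfull; case: ltnP => ij; first exact: (Gmat' t).
  have ji : (j < i)%N.
    rewrite ltn_neqAle ij andbT; apply/eqP => e.
    by have [_ _ nij _ _] := W; apply: nij; apply: val_inj.
  have W' := wall_sym W.
  have U := Gmat_unit hT hcons W' ji.
  rewrite (Gmat' t) //; move: U; set G := Gmat R L g Th j i; clearbody G => U.
  apply: invmx_eq.
    by rewrite /P /Q !mulmxA cancQP // -(mulmxA (dgi (c j)) G) mulmxV //
      mulmx1 dgiK.
  by rewrite /P /Q !mulmxA cancQP // -(mulmxA (dgi (c i)) (invmx G)) mulVmx //
      mulmx1 dgiK.
have chain : forall sq i0, (forall k, k \in i0 :: sq -> maxc R L k) ->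
    adj_chain R L i0 sq ->
    chain_mx R L g' Th' i0 sq = P i0 *m chain_mx R L g Th i0 sq *m Q (last i0 sq).
  elim=> [|b sq IH] i0 hk /=.
    by move=> _; rewrite mulmx1 dgiK // => a; apply: hc; apply: hk; rewrite inE.
  case=> hab hadj; rewrite Gfull' // IH //; last first.
    by move=> k kin; apply: hk; rewrite inE kin orbT.
  rewrite /P /Q !mulmxA cancQP //.
  by move=> a; apply: hc; apply: hk; rewrite !inE eqxx orbT.
split.
- move=> t i j W ij; have [mi _] := mW _ _ _ W.
  have ci : forall a, c i a != 0 by move=> a; apply: hc.
  have [sq [uq hsq [N0 [E [hNE hT']]]]] := hTh t i j W ij.
  exists sq; split => //.
  exists (fun X => P i *m N0 X *m Q i), (fun X => P i *m E X *m Q i); split.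
    move=> X /hNE [hN hE]; split; last exact: conj_exp.
    move=> a b; rewrite /P /Q conj_entry => nz; apply: hN.
    by apply: contraNneq nz => ->; rewrite mulr0 mul0r.
  by rewrite /Th' hT' /P /Q conj_foldr.
- move=> w i0 sq hk hadj hlast.
  rewrite chain //; last by move=> k /hk [].
  rewrite (hcons w i0 sq hk hadj hlast) hlast mulmx1 dgiK // => a; apply: hc.
  by have [] := hk i0 (mem_head _ _).
- exists Q; split.
  + move=> i mi; have ci : forall a, c i a != 0 by move=> a; apply: hc.
    have regd : forall d : 'rV[C R]_r, regular_on R L i (diag_mx d).
      move=> d a b; rewrite mxE; case: (eqVneq a b) => [->|nab]; last by rewrite mulr0n eqxx.
      move=> _; rewrite subrr; apply/allP => v _.
      by rewrite /pairZ big1 // => k _; rewrite mxE mul0r.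
    have iQ : invmx (Q i) = P i by apply: invmx_eq; rewrite ?dgKi ?dgiK.
    split; [|exact: regd|by rewrite iQ; exact: regd].
    by have [] := mulmx1_unit (dgKi ci).
  + move=> t i j W ij; have [mi _] := mW _ _ _ W.
    rewrite (Gmat' t) // /P /Q /Gmat !mulmxA dgKi ?mul1mx //.
    by move=> a; apply: hc.
Qed.
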